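(* Suppose $S_X=S_Y=S$ is a finite nonempty set and $\varphi:S\times S\to\mathbb{R}$ is symmetric, i.e., $\varphi(a,b)=\varphi(b,a)$ for all $a,b\in S$. Then $\varphi\equiv0$ is enforceable if and only if there exists a trivial autocratic strategy or $\max_{\tau_X\in\Delta(S_X)}\min_{\tau_Y\in\Delta(S_Y)}\varphi(\tau_X,\tau_Y)=0$.
   Context: Two players $X,Y$ play a repeated game; $\Delta(S)$ denotes the probability distributions on $S$; $\varphi$ is extended bilinearly to mixed actions, $\varphi(\tau_X,\tau_Y)=\mathbb{E}_{s_X\sim\tau_X,s_Y\sim\tau_Y}[\varphi(s_X,s_Y)]$. Histories: $\mathcal{H}=\bigcup_{T\ge0}(S_X\times S_Y)^T$; behavioral strategies are maps $\sigma:\mathcal{H}\to\Delta(S)$; players independently draw actions each round from their strategies evaluated at the history of realized action pairs, with $\mathbb{E}_{\sigma_X,\sigma_Y}$ the expectation over the resulting play. For $\lambda\in[0,1)$, $\sigma_X$ is $(\varphi,\lambda)$-autocratic if for every behavioral strategy $\sigma_Y$, $\mathbb{E}_{\sigma_X,\sigma_Y}[(1-\lambda)\sum_{t\ge0}\lambda^t\varphi(s_X^t,s_Y^t)]=0$; it is $(\varphi,1)$-autocratic if for every $\sigma_Y$ the limit $\lim_{T\to\infty}\frac1{T+1}\sum_{t=0}^T\mathbb{E}_{\sigma_X,\sigma_Y}[\varphi(s_X^t,s_Y^t)]$ exists and equals $0$. $\varphi\equiv0$ is enforceable if a $(\varphi,\lambda)$-autocratic behavioral strategy exists for some $\lambda\in[0,1]$.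 A trivial autocratic strategy is a mixed action $\tau_X\in\Delta(S_X)$ with $\varphi(\tau_X,s_Y)=0$ for all $s_Y\in S_Y$, played unconditionally in every round. *)

(* Defs.v *)
From HB Require Import structures.
From mathcomp Require Import all_boot all_order all_algebra.
From mathcomp Require Import all_classical all_reals all_analysis.
Set Implicit Arguments. Unset Strict Implicit. Unset Printing Implicit Defensive.
Import Order.TTheory GRing.Theory Num.Theory.
Import numFieldNormedType.Exports.
Local Open Scope ring_scope.
Local Open Scope classical_set_scope.

Definition is_mixed (R : realType) (S : finType) (tau : {ffun S -> R}) : Prop :=
  (forall s, 0 <= tau s) /\ \sum_(s : S) tau s = 1.

Definition pure (R : realType) (S : finType) (b : S) : {ffun S -> R} :=
  [ffun s => (s == b)%:R].

Definition phiM (R : realType) (S : finType) (phi : S -> S -> R)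
  (tX tY : {ffun S -> R}) : R :=
  \sum_(a : S) \sum_(b : S) tX a * tY b * phi a b.

(* Histories: sequences of realized action pairs, oldest first. *)
Definition history (S : finType) := seq (S * S)%type.

Definition strategy (R : realType) (S : finType) := history S -> {ffun S -> R}.

Definition is_behavioral (R : realType) (S : finType) (sigma : strategy R S) : Prop :=
  forall h, is_mixed (sigma h).

Fixpoint hist_prob_from (R : realType) (S : finType) (sX sY : strategy R S)
  (pre : history S) (h : history S) : R :=
  match h with
  | [::] => 1
  | x :: h' => sX pre x.1 * sY pre x.2 * hist_prob_from sX sY (rcons pre x) h'
  end.

Definition hist_prob (R : realType) (S : finType) (sX sY : strategy R S)
  (h : history S) : R := hist_prob_from sX sY [::] h.

(* E_{sX,sY}[phi(s_X^t, s_Y^t)]: sum over all histories of length t. *)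
Definition stage_payoff (R : realType) (S : finType) (phi : S -> S -> R)
  (sX sY : strategy R S) (t : nat) : R :=
  \sum_(h : t.-tuple (S * S)%type)
     hist_prob sX sY (tval h) * phiM phi (sX (tval h)) (sY (tval h)).

Definition autocratic (R : realType) (S : finType) (phi : S -> S -> R)
  (lam : R) (sX : strategy R S) : Prop :=
  forall sY : strategy R S, is_behavioral sY ->
    if lam < 1 then
      (fun T : nat => \sum_(0 <= t < T) (1 - lam) * lam ^+ t * stage_payoff phi sX sY t)
        @ \oo --> (0 : R)
    else
      (fun T : nat => (T.+1%:R)^-1 * \sum_(0 <= t < T.+1) stage_payoff phi sX sY t)
        @ \oo --> (0 : R).

Definition enforceable (R : realType) (S : finType) (phi : S -> S -> R) : Prop :=
  exists lam : R, 0 <= lam <= 1 /\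
    exists sX : strategy R S, is_behavioral sX /\ autocratic phi lam sX.

Definition trivial_autocratic_exists (R : realType) (S : finType)
  (phi : S -> S -> R) : Prop :=
  exists tX : {ffun S -> R}, is_mixed tX /\ forall b : S, phiM phi tX (pure R b) = 0.

(* max_{tX} min_{tY} phi(tX,tY), written with sup/inf (both are attained). *)
Definition minval (R : realType) (S : finType) (phi : S -> S -> R)
  (tX : {ffun S -> R}) : R :=
  inf [set phiM phi tX tY | tY in [set tY : {ffun S -> R} | is_mixed tY]].

Definition maxmin (R : realType) (S : finType) (phi : S -> S -> R) : R :=
  sup [set minval phi tX | tX in [set tX : {ffun S -> R} | is_mixed tX]].

(* Main.v *)
Require Import Defs.
From HB Require Import structures.
From mathcomp Require Import all_boot all_order all_algebra.
From mathcomp Require Import all_classical all_reals all_analysis.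
From mathcomp Require Import ring lra.
Import Order.TTheory GRing.Theory Num.Theory.
Import numFieldNormedType.Exports.
Set Implicit Arguments. Unset Strict Implicit.
Local Open Scope ring_scope.
Local Open Scope classical_set_scope.

Definition dot (R : realType) (S : finType) (d x : S -> R) : R := \sum_a d a * x a.

Lemma dot_linr (R : realType) (S : finType) (d y p : S -> R) (k m : R) :
  dot d (fun a => k * y a + m * p a) = k * dot d y + m * dot d p.
Proof.
rewrite /dot !mulr_sumr -big_split /=; apply: eq_bigr => a _; ring.
Qed.

Lemma dot_linl (R : realType) (S : finType) (d e x : S -> R) (k : R) :
  dot (fun a => d a - k * e a) x = dot d x - k * dot e x.
Proof.
rewrite /dot mulr_sumr -sumrN -big_split /=; apply: eq_bigr => a _; ring.
Qed.

Lemma gordan (R : realType) (S I : finType) (n : nat) :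
  forall (f : I -> S -> R) (A : {set I}), #|A| = n ->
  (exists x : S -> R, forall i, i \in A -> 0 < dot (f i) x) \/
  (exists w : I -> R, (forall i, i \in A -> 0 <= w i) /\
     (exists2 i, i \in A & w i != 0) /\
     forall a, \sum_(i in A) w i * f i a = 0).
Proof.
elim: n => [|n IH] f A hA.
  left; exists (fun _ => 0) => i; by rewrite (cards0_eq hA) inE.
have [i0 i0A] : exists i0, i0 \in A by apply/card_gt0P; rewrite hA.
set A' := A :\ i0.
have hA' : #|A'| = n by move: hA; rewrite (cardsD1 i0) i0A add1n => -[].
have inA' : forall i, i \in A' -> (i != i0) && (i \in A).
  by move=> i; rewrite in_setD1.
set l := f i0.
case: (IH f A' hA') => [[x0 Hx0] | [w [w0 [[j jA wj] wsum]]]]; last first.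
  right; exists (fun i => if i == i0 then 0 else w i); split; last split.
  - move=> i iA; case: (eqVneq i i0) => [_|ne] //.
    by apply: w0; rewrite in_setD1 iA ne.
  - exists j; first by case/andP: (inA' j jA).
    by case/andP: (inA' j jA) => /negbTE -> _.
  - move=> a; rewrite (big_setD1 i0 i0A) /= eqxx mul0r add0r -[RHS](wsum a).
    by apply: eq_bigr => i /inA' /andP[/negbTE -> _].
case: (ltP 0 (dot l x0)) => hl.
  left; exists x0 => i iA; case: (eqVneq i i0) => [->//|ne].
  by apply: Hx0; rewrite in_setD1 ne iA.
case: (boolP [forall a, l a == 0]) => hl0.
  right; exists (fun i => (i == i0)%:R); split; last split.
  - by move=> i _; rewrite ler0n.
  - by exists i0; rewrite // eqxx oner_neq0.
  - move=> a; rewrite (big_setD1 i0 i0A) eqxx mul1r.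
    rewrite (eq_bigr (fun _ => 0)); last by move=> i /inA' /andP[/negbTE -> _]; rewrite mul0r.
    by rewrite big1_eq /= addr0; apply/eqP; exact: (forallP hl0 a).
move/forallPn: hl0 => [a0 ha0].
set p := fun a => (a == a0)%:R / l a0.
have lp : forall g : S -> R, dot g p = g a0 / l a0.
  move=> g; rewrite /dot (bigD1 a0) //= /p eqxx mul1r big1 ?addr0 //.
  by move=> a /negbTE ->; rewrite mul0r mulr0.
have lp1 : dot l p = 1 by rewrite lp divff.
set f' := fun i a => f i a - dot (f i) p * l a.
case: (IH f' A' hA') => [[y Hy] | [w [w0 [[j jA wj] wsum]]]].
  set q := fun i => dot (f' i) y.
  have hq : forall i, dot (f' i) y = dot (f i) y - dot (f i) p * dot l y.
    by move=> i; rewrite /f' dot_linl.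
  set K := 1 + \sum_(i in A') `|dot (f i) p| / q i.
  have hK : forall i, i \in A' -> 1 + `|dot (f i) p| / q i <= K.
    move=> i iA; rewrite /K lerD2l (big_setD1 i iA) /= lerDl.
    apply: sumr_ge0 => k /setD1P[_ kA]; apply: divr_ge0 => //.
    exact: ltW (Hy k kA).
  left; exists (fun a => K * y a + (1 - K * dot l y) * p a) => i iA.
  rewrite dot_linr.
  case: (eqVneq i i0) => [->|ne].
    rewrite -/l lp1; lra.
  have iA' : i \in A' by rewrite in_setD1 ne iA.
  have qi := Hy i iA'; have Ki := hK i iA'.
  have e : K * dot (f i) y + (1 - K * dot l y) * dot (f i) p
           = K * q i + dot (f i) p by rewrite /q hq; ring.
  rewrite e.
  have : `|dot (f i) p| + q i <= K * q i.
    have := ler_wpM2r (ltW qi) Ki.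
    by rewrite mulrDl mul1r mulfVK ?gt_eqF // addrC.
  have := ler_norm (- dot (f i) p); rewrite normrN.
  have qi2 : 0 < q i by []. move: (K * q i) qi2 => t qi2; lra.
set mu := \sum_(i in A') w i * dot (f i) p.
have hsum : forall a, \sum_(i in A') w i * f i a = mu * l a.
  move=> a.
  have e : \sum_(i in A') w i * f' i a = \sum_(i in A') w i * f i a - mu * l a.
    by rewrite /mu mulr_suml -sumrB; apply: eq_bigr => i _; rewrite /f'; ring.
  by apply/eqP; rewrite -subr_eq0 -e wsum.
case: (lerP mu 0) => hmu.
  right; exists (fun i => if i == i0 then - mu else w i); split; last split.
  - move=> i iA; case: eqP => [_|/eqP ne]; first by rewrite oppr_ge0.
    by apply: w0; rewrite in_setD1 ne iA.
  - exists j; first by case/andP: (inA' j jA).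
    by case/andP: (inA' j jA) => /negbTE -> _.
  - move=> a; rewrite (big_setD1 i0 i0A) eqxx.
    rewrite (eq_bigr (fun i => w i * f i a)); last by move=> i /inA' /andP[/negbTE -> _].
    by rewrite hsum /= mulNr addNr.
exfalso.
have h1 : \sum_(i in A') w i * dot (f i) x0 = mu * dot l x0.
  rewrite /dot.
  under eq_bigr do rewrite mulr_sumr.
  rewrite exchange_big /= mulr_sumr; apply: eq_bigr => a _.
  by rewrite [RHS]mulrA -hsum mulr_suml; apply: eq_bigr => i _; rewrite mulrA.
have h2 : 0 < \sum_(i in A') w i * dot (f i) x0.
  rewrite (big_setD1 j jA) /=.
  apply: ltr_pwDl.
    apply: mulr_gt0; last exact: Hx0.
    by rewrite lt_def wj w0.
  apply: sumr_ge0 => k /setD1P[_ kA]; apply: mulr_ge0; first exact: w0.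
  exact: ltW (Hx0 k kA).
have : mu * dot l x0 <= 0 by apply: mulr_ge0_le0 => //; exact: ltW.
lra.
Qed.


Lemma phiM_pure (R : realType) (S : finType) (phi : S -> S -> R) tX b :
  phiM phi tX (pure R b) = \sum_a tX a * phi a b.
Proof.
rewrite /phiM; apply: eq_bigr => a _.
rewrite (bigD1 b) //= big1 ?addr0 /pure ?ffunE ?eqxx ?mulr1 //.
by move=> c /negbTE hc; rewrite ffunE hc mulr0 mul0r.
Qed.

Lemma phiM_decY (R : realType) (S : finType) (phi : S -> S -> R) tX tY :
  phiM phi tX tY = \sum_b tY b * phiM phi tX (pure R b).
Proof.
rewrite {1}/phiM exchange_big /=; apply: eq_bigr => b _.
rewrite phiM_pure mulr_sumr; apply: eq_bigr => a _; ring.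
Qed.

Lemma phiM_sym (R : realType) (S : finType) (phi : S -> S -> R)
  (Hsym : forall a b, phi a b = phi b a) tX tY :
  phiM phi tX tY = phiM phi tY tX.
Proof.
rewrite /phiM exchange_big /=; apply: eq_bigr => b _; apply: eq_bigr => a _.
rewrite Hsym; ring.
Qed.

Lemma phiM_N (R : realType) (S : finType) (phi : S -> S -> R) tX tY :
  phiM (fun a b => - phi a b) tX tY = - phiM phi tX tY.
Proof.
rewrite /phiM -sumrN; apply: eq_bigr => a _; rewrite -sumrN.
by apply: eq_bigr => b _; rewrite mulrN.
Qed.

Lemma mixed_le1 (R : realType) (S : finType) (x : {ffun S -> R}) a :
  is_mixed x -> x a <= 1.
Proof.
move=> [x0 x1]; rewrite -x1 (bigD1 a) //= lerDl.
by apply: sumr_ge0 => i _.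
Qed.

Lemma pure_mixed (R : realType) (S : finType) (b : S) : is_mixed (pure R b).
Proof.
split; first by move=> s; rewrite /pure ffunE ler0n.
rewrite (bigD1 b) //= big1 ?addr0 /pure ?ffunE ?eqxx //.
by move=> c /negbTE hc; rewrite ffunE hc.
Qed.

Definition Mb (R : realType) (S : finType) (phi : S -> S -> R) : R :=
  \sum_a \sum_b `|phi a b|.

Lemma phiM_bound (R : realType) (S : finType) (phi : S -> S -> R) x y :
  is_mixed x -> is_mixed y -> `|phiM phi x y| <= Mb phi.
Proof.
move=> hx hy; rewrite /phiM /Mb.
apply: (le_trans (ler_norm_sum _ _ _)); apply: ler_sum => a _.
apply: (le_trans (ler_norm_sum _ _ _)); apply: ler_sum => b _.
rewrite !normrM (ger0_norm (hx.1 a)) (ger0_norm (hy.1 b)).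
have hxy : x a * y b <= 1.
  rewrite -[X in _ <= X]mul1r; apply: ler_pM; [exact: hx.1|exact: hy.1|exact: mixed_le1|exact: mixed_le1].
by rewrite -[X in _ <= X]mul1r; apply: ler_wpM2r.
Qed.

Lemma phiM_lb (R : realType) (S : finType) (phi : S -> S -> R) x y :
  is_mixed x -> is_mixed y -> - Mb phi <= phiM phi x y <= Mb phi.
Proof.
move=> hx hy; have := phiM_bound phi hx hy.
by rewrite ler_norml.
Qed.

Lemma phiM_ge_pure (R : realType) (S : finType) (phi : S -> S -> R) x y c :
  is_mixed y -> (forall b, c <= phiM phi x (pure R b)) -> c <= phiM phi x y.
Proof.
move=> [y0 y1] H; rewrite phiM_decY -[c]mul1r -y1 mulr_suml.
by apply: ler_sum => b _; apply: ler_wpM2l.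
Qed.

Lemma phiM_le_pure (R : realType) (S : finType) (phi : S -> S -> R) x y c :
  is_mixed y -> (forall b, phiM phi x (pure R b) <= c) -> phiM phi x y <= c.
Proof.
move=> [y0 y1] H; rewrite phiM_decY -[c]mul1r -y1 mulr_suml.
by apply: ler_sum => b _; apply: ler_wpM2l.
Qed.

Lemma sum_tuple0 (R : realType) (T : finType) (F : seq T -> R) :
  \sum_(h : 0.-tuple T) F h = F [::].
Proof.
rewrite (eq_bigr (fun _ => F [::])); last by move=> h _; rewrite tuple0.
by rewrite sumr_const card_tuple expn0.
Qed.

Lemma sum_tuple_cons (R : realType) (T : finType) (t : nat) (F : seq T -> R) :
  \sum_(h : t.+1.-tuple T) F h = \sum_(x : T) \sum_(h : t.-tuple T) F (x :: h).
Proof.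
rewrite pair_bigA /=.
rewrite (reindex (fun p : T * t.-tuple T => [tuple of p.1 :: p.2])) /=; first by [].
exists (fun h : t.+1.-tuple T => (thead h, [tuple of behead h])).
  by move=> [x h] _ /=; congr pair; apply: val_inj.
by move=> h _ /=; rewrite -tuple_eta.
Qed.

Lemma sum_tuple_rcons (R : realType) (T : finType) (t : nat) :
  forall (F : seq T -> R),
  \sum_(h : t.+1.-tuple T) F h = \sum_(h : t.-tuple T) \sum_(x : T) F (rcons h x).
Proof.
elim: t => [|t IH] F.
  rewrite sum_tuple_cons (sum_tuple0 (fun h => \sum_x F (rcons h x))); apply: eq_bigr => x _.
  by rewrite (sum_tuple0 (fun h => F (x :: h))).
rewrite sum_tuple_cons.
rewrite (eq_bigr (fun x => \sum_(h : t.-tuple T) \sum_(y : T) F (x :: rcons h y))); last first.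
  by move=> x _; rewrite (IH (fun h => F (x :: h))).
rewrite [RHS](@sum_tuple_cons _ _ _ (fun h => \sum_y F (rcons h y))); apply: eq_bigr => x _; by [].
Qed.

Lemma sum_pair (R : realType) (S : finType) (F : S * S -> R) :
  \sum_(x : S * S) F x = \sum_a \sum_b F (a, b).
Proof. by rewrite pair_bigA; apply: eq_bigr => -[a b]. Qed.

Lemma hpf_rcons (R : realType) (S : finType) (sX sY : strategy R S) h x :
  forall pre, hist_prob_from sX sY pre (rcons h x) =
   hist_prob_from sX sY pre h * (sX (pre ++ h) x.1 * sY (pre ++ h) x.2).
Proof.
elim: h => [|y h IH] pre /=.
  by rewrite cats0 mulr1 mul1r.
by rewrite IH -cat_rcons mulrA.
Qed.

Lemma hpf_ge0 (R : realType) (S : finType) (sX sY : strategy R S) :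
  is_behavioral sX -> is_behavioral sY -> forall h pre, 0 <= hist_prob_from sX sY pre h.
Proof.
move=> hX hY; elim=> [|y h IH] pre /=; first by [].
apply: mulr_ge0; last exact: IH.
by apply: mulr_ge0; [exact: (hX pre).1 | exact: (hY pre).1].
Qed.

Lemma sum_mixed_pair (R : realType) (S : finType) (u v : {ffun S -> R}) (G : S -> R) :
  is_mixed u -> \sum_(x : S * S) u x.1 * v x.2 * G x.2 = \sum_b v b * G b.
Proof.
move=> [_ u1]; rewrite sum_pair /=.
rewrite (eq_bigr (fun a => u a * \sum_b v b * G b)); last first.
  by move=> a _; rewrite mulr_sumr; apply: eq_bigr => b _; rewrite mulrA.
by rewrite -mulr_suml u1 mul1r.
Qed.

Lemma sum_hist_prob (R : realType) (S : finType) (sX sY : strategy R S) t :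
  is_behavioral sX -> is_behavioral sY ->
  \sum_(h : t.-tuple (S * S)) hist_prob sX sY h = 1.
Proof.
move=> hX hY; elim: t => [|t IH].
  by rewrite (sum_tuple0 (fun h => hist_prob sX sY h)).
rewrite (@sum_tuple_rcons _ _ _ (fun h => hist_prob sX sY h)) -[RHS]IH.
apply: eq_bigr => h _; rewrite /hist_prob.
under eq_bigr do rewrite hpf_rcons cat0s.
rewrite -mulr_sumr.
by rewrite sum_pair /= -big_distrlr /= (hX h).2 (hY h).2 !mulr1.
Qed.

Lemma stage_ge (R : realType) (S : finType) (phi : S -> S -> R) sX sY c :
  is_behavioral sX -> is_behavioral sY ->
  (forall h, c <= phiM phi (sX h) (sY h)) -> forall t, c <= stage_payoff phi sX sY t.
Proof.
move=> hX hY H t; rewrite /stage_payoff.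
rewrite -[c]mul1r -(sum_hist_prob t hX hY) mulr_suml.
apply: ler_sum => h _; apply: ler_wpM2l => //.
exact: hpf_ge0.
Qed.

Lemma stage_le (R : realType) (S : finType) (phi : S -> S -> R) sX sY c :
  is_behavioral sX -> is_behavioral sY ->
  (forall h, phiM phi (sX h) (sY h) <= c) -> forall t, stage_payoff phi sX sY t <= c.
Proof.
move=> hX hY H t; rewrite /stage_payoff.
rewrite -[c]mul1r -(sum_hist_prob t hX hY) mulr_suml.
apply: ler_sum => h _; apply: ler_wpM2l => //.
exact: hpf_ge0.
Qed.


Lemma geom (R : realType) (lam : R) T :
  (1 - lam) * \sum_(0 <= t < T) lam ^+ t = 1 - lam ^+ T.
Proof.
elim: T => [|T IH]; first by rewrite big_geq // expr0 mulr0 subrr.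
rewrite big_nat_recr //= mulrDr IH exprS; ring.
Qed.

Lemma nocvg (R : realType) (g : nat -> R) (c lam : R) :
  0 < c -> (forall t, c <= g t) -> 0 <= lam <= 1 ->
  ~ (if lam < 1 then
      (fun T : nat => \sum_(0 <= t < T) (1 - lam) * lam ^+ t * g t) @ \oo --> (0 : R)
    else
      (fun T : nat => (T.+1%:R)^-1 * \sum_(0 <= t < T.+1) g t) @ \oo --> (0 : R)).
Proof.
move=> c0 hg /andP[l0 l1]; case: ifPn => hl H.
  have wcvg : (fun T : nat => c * (1 - lam ^+ T)) @ \oo --> c.
    rewrite -[X in _ --> X](mulr1 c) -[X in c * X](subr0 1).
    apply: cvgMl_tmp; apply: cvgB; first exact: cvg_cst.
    by apply: cvg_expr; rewrite ger0_norm.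
  have le : forall T : nat, c * (1 - lam ^+ T) <= \sum_(0 <= t < T) (1 - lam) * lam ^+ t * g t.
    move=> T; rewrite -geom mulrCA !mulr_sumr; apply: ler_sum => t _.
    rewrite mulrCA [c * _]mulrC; apply: ler_wpM2l => //.
    by apply: mulr_ge0; [rewrite subr_ge0 ltW | exact: exprn_ge0].
  have h : c <= 0 by apply: (ler_cvg_to wcvg H); apply: nearW.
  by have := lt_le_trans c0 h; rewrite ltxx.
have le : forall T : nat, c <= (T.+1%:R)^-1 * \sum_(0 <= t < T.+1) g t.
  move=> T.
  have : \sum_(0 <= t < T.+1) c <= \sum_(0 <= t < T.+1) g t by apply: ler_sum => t _.
  rewrite sumr_const_nat subn0 => h.
  rewrite -(ler_pM2l (_ : 0 < T.+1%:R)) ?ltr0Sn // mulrA mulfV ?pnatr_eq0 // mul1r.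
  by rewrite mulr_natl.
have h : c <= 0 by apply: (ler_cvg_to (cvg_cst c) H); apply: nearW.
by have := lt_le_trans c0 h; rewrite ltxx.
Qed.


Lemma finite_pos_lb (R : realType) (S : finType) (g : S -> R) :
  (forall b, 0 < g b) -> exists2 d, 0 < d & forall b, d <= g b.
Proof.
move=> hg.
have K0 : 0 < 1 + \sum_b (g b)^-1.
  by apply: ltr_pwDl => //; apply: sumr_ge0 => b _; rewrite invr_ge0 ltW.
exists (1 + \sum_b (g b)^-1)^-1; first by rewrite invr_gt0.
move=> b; rewrite -[X in X <= _]mul1r ler_pdivrMr //.
have hK : (g b)^-1 <= 1 + \sum_b (g b)^-1.
  rewrite (bigD1 b) //= addrCA lerDl; apply: addr_ge0 => //.
  by apply: sumr_ge0 => c _; rewrite invr_ge0 ltW.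
have := ler_wpM2l (ltW (hg b)) hK; rewrite mulfV ?gt_eqF //.
Qed.

Lemma alt (R : realType) (S : finType) (psi : S -> S -> R)
  (HS : (0 < #|S|)%N) (Hs : forall a b, psi a b = psi b a) :
  (exists x, is_mixed x /\ forall b, 0 < phiM psi x (pure R b)) \/
  (exists y, is_mixed y /\ forall a, phiM psi y (pure R a) <= 0).
Proof.
case/card_gt0P: HS => b0 _.
pose f : (S + S)%type -> S -> R := fun i =>
  match i with inl b => fun a => psi a b | inr a' => fun a => (a == a')%:R end.
case: (@gordan R S _ #|[set: (S + S)%type]%SET| f [set: (S + S)%type]%SET erefl) =>
  [[x Hx] | [w [w0 [[j _ wj] ws]]]].
  left.
  have xpos : forall a, 0 < x a.
    move=> a; have e : dot (f (inr a)) x = x a.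
      rewrite /dot /f (bigD1 a) //= eqxx mul1r big1 ?addr0 //.
      by move=> c /negbTE ->; rewrite mul0r.
    by rewrite -e; apply: Hx; rewrite finset.in_setT.
  set s := \sum_a x a.
  have s0 : 0 < s.
    rewrite /s (bigD1 b0) //=; apply: ltr_pwDl => //.
    by apply: sumr_ge0 => c _; apply: ltW.
  exists [ffun a => x a / s]; split.
    split; first by move=> a; rewrite ffunE divr_ge0 // ltW.
    under eq_bigr do rewrite ffunE.
    by rewrite -mulr_suml mulfV // gt_eqF.
  move=> b; rewrite phiM_pure.
  under eq_bigr do rewrite ffunE.
  have := Hx (inl b) (finset.in_setT _); rewrite /dot /f => h.
  have -> : \sum_a x a / s * psi a b = (\sum_a psi a b * x a) / s.
    by rewrite mulr_suml; apply: eq_bigr => a _; ring.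
  by rewrite divr_gt0.
right.
have e : forall a, \sum_b w (inl b) * psi a b + w (inr a) = 0.
  move=> a; rewrite -[RHS](ws a) big_sumType /=; congr (_ + _).
    by apply: eq_big => [b|b _]; rewrite ?finset.in_setT.
  rewrite (bigD1 a) ?finset.in_setT //= eqxx mulr1 big1 ?addr0 //.
  by move=> c /andP[_ hc]; rewrite eq_sym (negbTE hc) mulr0.
set s := \sum_b w (inl b).
have s0 : 0 <= s by apply: sumr_ge0 => b _; apply: w0; rewrite finset.in_setT.
have sn0 : s != 0.
  apply/eqP => hs.
  have wl : forall b, w (inl b) = 0.
    by move=> b; apply: (psumr_eq0P _ hs) => // c _; apply: w0; rewrite finset.in_setT.
  have wr : forall a, w (inr a) = 0.
    move=> a; have := e a; rewrite big1 ?add0r // => c _.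
    by rewrite wl mul0r.
  by move: wj; case: j => [b|a]; rewrite ?wl ?wr eqxx.
have sp : 0 < s by rewrite lt_def sn0 s0.
exists [ffun b => w (inl b) / s]; split.
  split; first by move=> b; rewrite ffunE divr_ge0 // w0 // finset.in_setT.
  under eq_bigr do rewrite ffunE.
  by rewrite -mulr_suml mulfV.
move=> a; rewrite phiM_pure.
under eq_bigr do rewrite ffunE.
have -> : \sum_b w (inl b) / s * psi b a = (\sum_b w (inl b) * psi a b) / s.
  by rewrite mulr_suml; apply: eq_bigr => b _; rewrite Hs; ring.
have -> : \sum_b w (inl b) * psi a b = - w (inr a).
  by apply/eqP; rewrite -addr_eq0 e.
rewrite mulNr oppr_le0 divr_ge0 // w0 // finset.in_setT.
Qed.


Lemma minval_le (R : realType) (S : finType) (phi : S -> S -> R) x y :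
  is_mixed x -> is_mixed y -> minval phi x <= phiM phi x y.
Proof.
move=> hx hy; rewrite /minval.
set E := [set phiM phi x tY | tY in _].
have hlb : has_lbound E.
  exists (- Mb phi) => z [y' hy' <-].
  by case/andP: (phiM_lb phi hx hy').
by apply: (ge_inf hlb); exists y.
Qed.

Lemma minval_ge (R : realType) (S : finType) (phi : S -> S -> R) x c :
  (0 < #|S|)%N -> (forall y, is_mixed y -> c <= phiM phi x y) -> c <= minval phi x.
Proof.
case/card_gt0P => b0 _ H; rewrite /minval; apply: lb_le_inf.
  by exists (phiM phi x (pure R b0)); exists (pure R b0) => //; exact: pure_mixed.
by move=> z [y hy <-]; apply: H.
Qed.

Lemma minval_bound (R : realType) (S : finType) (phi : S -> S -> R) x :
  (0 < #|S|)%N -> is_mixed x -> minval phi x <= Mb phi.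
Proof.
case/card_gt0P => b0 _ hx.
apply: (le_trans (minval_le phi hx (pure_mixed R b0))).
by case/andP: (phiM_lb phi hx (pure_mixed R b0)).
Qed.

Lemma maxmin_ge (R : realType) (S : finType) (phi : S -> S -> R) x :
  (0 < #|S|)%N -> is_mixed x -> minval phi x <= maxmin phi.
Proof.
move=> HS hx; rewrite /maxmin.
set E := [set minval phi tX | tX in _].
have hub : has_ubound E.
  by exists (Mb phi) => z [x' hx' <-]; apply: minval_bound.
by apply: (ub_le_sup hub); exists x.
Qed.

Lemma maxmin_le (R : realType) (S : finType) (phi : S -> S -> R) c :
  (0 < #|S|)%N -> (forall x, is_mixed x -> minval phi x <= c) -> maxmin phi <= c.
Proof.
move=> HS H; have [b0 _] := card_gt0P HS; rewrite /maxmin; apply: ge_sup.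
  by exists (minval phi (pure R b0)); exists (pure R b0) => //; exact: pure_mixed.
by move=> z [x hx <-]; apply: H.
Qed.

Lemma maxmin_gt (R : realType) (S : finType) (phi : S -> S -> R) :
  (0 < #|S|)%N -> 0 < maxmin phi -> exists2 x, is_mixed x & 0 < minval phi x.
Proof.
move=> HS hv; have [b0 _] := card_gt0P HS.
have ne : [set minval phi tX | tX in [set tX | is_mixed tX]] !=set0.
  by exists (minval phi (pure R b0)); exists (pure R b0) => //; exact: pure_mixed.
by case: (sup_gt ne hv) => z [x hx <-] hz; exists x.
Qed.

Lemma minval_lt (R : realType) (S : finType) (phi : S -> S -> R) x c :
  (0 < #|S|)%N -> minval phi x < c -> exists2 y, is_mixed y & phiM phi x y < c.
Proof.
move=> HS hv; have [b0 _] := card_gt0P HS.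
have ne : [set phiM phi x tY | tY in [set tY | is_mixed tY]] !=set0.
  by exists (phiM phi x (pure R b0)); exists (pure R b0) => //; exact: pure_mixed.
by case: (inf_lt ne hv) => z [y hy <-] hz; exists y.
Qed.


Lemma fwd (R : realType) (S : finType) (phi : S -> S -> R)
  (HS : (0 < #|S|)%N) (Hsym : forall a b : S, phi a b = phi b a) :
  enforceable phi -> maxmin phi = 0.
Proof.
move=> [lam [hlam [sX [hX haut]]]].
case: (ltgtP (maxmin phi) 0) => // hv; exfalso.
  set m := maxmin phi in hv *.
  have hex : forall x, is_mixed x -> exists b, phiM phi x (pure R b) < m / 2.
    move=> x hx.
    have : minval phi x < m / 2 by apply: (le_lt_trans (maxmin_ge phi HS hx)); rewrite -/m; lra.
    case/(minval_lt HS) => y hy hlt.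
    case: (pickP (fun b => phiM phi x (pure R b) < m / 2)) => [b hb|none]; first by exists b.
    have : m / 2 <= phiM phi x y.
      apply: (phiM_ge_pure (phi:=phi) (x:=x) hy) => b; have := none b; rewrite /= => /negbT.
      by rewrite -leNgt.
    lra.
  pose sY : strategy R S := fun h =>
    match [pick b | phiM phi (sX h) (pure R b) < m / 2] with
    | Some b => pure R b | None => sX h end.
  have hY : is_behavioral sY.
    by move=> h; rewrite /sY; case: pickP => [b _|_]; [exact: pure_mixed | exact: hX].
  have hb : forall h, phiM phi (sX h) (sY h) <= m / 2.
    move=> h; rewrite /sY; case: pickP => [b hb|none]; first exact: ltW.
    case: (hex _ (hX h)) => b hb; by rewrite none in hb.
  have hst := stage_le hX hY hb.
  have hc : 0 < - (m / 2) by lra.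
  apply: (@nocvg R (fun t => - stage_payoff phi sX sY t) (- (m / 2)) lam hc _ hlam).
    by move=> t; rewrite lerN2.
  move: (haut sY hY); case: ifP => _ H.
    have e : (fun T : nat => \sum_(0 <= t < T) (1 - lam) * lam ^+ t * - stage_payoff phi sX sY t)
      = (- (fun T : nat => \sum_(0 <= t < T) (1 - lam) * lam ^+ t * stage_payoff phi sX sY t)).
      by apply/funext => T /=; rewrite fctE -sumrN; apply: eq_bigr => t _; rewrite mulrN.
    by rewrite e -[X in _ --> X]oppr0; apply: cvgN.
  have e : (fun T : nat => (T.+1%:R)^-1 * \sum_(0 <= t < T.+1) - stage_payoff phi sX sY t)
    = (- (fun T : nat => (T.+1%:R)^-1 * \sum_(0 <= t < T.+1) stage_payoff phi sX sY t)).
    by apply/funext => T /=; rewrite fctE sumrN mulrN.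
  by rewrite e -[X in _ --> X]oppr0; apply: cvgN.
case: (maxmin_gt HS hv) => x0 hx0 hpos.
pose sY : strategy R S := fun _ => x0.
have hY : is_behavioral sY by move=> h.
have hb : forall h, minval phi x0 <= phiM phi (sX h) (sY h).
  by move=> h; rewrite phiM_sym //; apply: minval_le.
exact: (nocvg hpos (stage_ge hX hY hb) hlam) (haut sY hY).
Qed.


Definition chs (R : realType) (S : finType) (xs z : {ffun S -> R}) (d : R) :=
  if d <= 0 then xs else z.

Fixpoint Dfrom (R : realType) (S : finType) (phi : S -> S -> R) (xs z : {ffun S -> R})
  (d : R) (h : history S) : R :=
  match h with
  | [::] => d
  | x :: h' => Dfrom phi xs z (d + phiM phi (chs xs z d) (pure R x.2)) h'
  end.

Lemma Dfrom_rcons (R : realType) (S : finType) (phi : S -> S -> R) xs z h x :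
  forall d, Dfrom phi xs z d (rcons h x) =
    Dfrom phi xs z d h + phiM phi (chs xs z (Dfrom phi xs z d h)) (pure R x.2).
Proof. by elim: h => [|y h IH] d //=. Qed.

Lemma Dbound (R : realType) (S : finType) (phi : S -> S -> R) xs z M :
  (forall b, 0 <= phiM phi xs (pure R b) <= M) ->
  (forall b, - M <= phiM phi z (pure R b) <= 0) ->
  forall h d, - M <= d <= M -> - M <= Dfrom phi xs z d h <= M.
Proof.
move=> hxs hz; elim=> [|y h IH] d hd //=.
apply: IH; rewrite /chs; case: ifP => hd0.
  by have := hxs y.2; move: hd hd0; lra.
move/negbT: hd0; rewrite -ltNge => hd0; have := hz y.2; move: hd; lra.
Qed.

Definition sXb (R : realType) (S : finType) (phi : S -> S -> R) (xs z : {ffun S -> R})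
  : strategy R S := fun h => chs xs z (Dfrom phi xs z 0 h).

Lemma sXb_beh (R : realType) (S : finType) (phi : S -> S -> R) (xs z : {ffun S -> R}) :
  is_mixed xs -> is_mixed z -> is_behavioral (sXb phi xs z).
Proof. by move=> hxs hz h; rewrite /sXb /chs; case: ifP. Qed.

Lemma expect (R : realType) (S : finType) (phi : S -> S -> R) (xs z : {ffun S -> R}) sY :
  is_mixed xs -> is_mixed z -> is_behavioral sY -> forall t,
  \sum_(h : t.-tuple (S * S)) hist_prob (sXb phi xs z) sY h * Dfrom phi xs z 0 h
  = \sum_(0 <= i < t) stage_payoff phi (sXb phi xs z) sY i.
Proof.
move=> hxs hz hY.
set sX := sXb phi xs z.
have hX : is_behavioral sX by apply: sXb_beh.
elim=> [|t IH].
  rewrite (sum_tuple0 (fun h => hist_prob sX sY h * Dfrom phi xs z 0 h)) big_geq //=.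
  by rewrite mulr0.
rewrite (@sum_tuple_rcons _ _ _ (fun h => hist_prob sX sY h * Dfrom phi xs z 0 h)).
rewrite big_nat_recr //= -IH /stage_payoff -big_split /=.
apply: eq_bigr => h _.
rewrite /hist_prob.
under eq_bigr do rewrite hpf_rcons cat0s Dfrom_rcons.
rewrite (eq_bigr (fun x : S * S => hist_prob_from sX sY [::] h * Dfrom phi xs z 0 h * (sX h x.1 * sY h x.2)
   + hist_prob_from sX sY [::] h * (sX h x.1 * sY h x.2 * phiM phi (sX h) (pure R x.2)))); last first.
  by move=> x _; rewrite /sX /sXb; ring.
rewrite big_split /= -!mulr_sumr.
rewrite (sum_mixed_pair (sY h) (fun b => phiM phi (sX h) (pure R b)) (hX h)).
rewrite -phiM_decY sum_pair /= -big_distrlr /= (hX h).2 (hY h).2 !mulr1.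
by [].
Qed.


Lemma bwd (R : realType) (S : finType) (phi : S -> S -> R) (xs z : {ffun S -> R}) :
  is_mixed xs -> is_mixed z ->
  (forall b, 0 <= phiM phi xs (pure R b)) -> (forall b, phiM phi z (pure R b) <= 0) ->
  enforceable phi.
Proof.
move=> hxs hz h1 h2.
set M := Mb phi.
have hX := sXb_beh phi hxs hz.
have M0 : 0 <= M by apply: sumr_ge0 => a _; apply: sumr_ge0 => b _.
have hxs' : forall b, 0 <= phiM phi xs (pure R b) <= M.
  move=> b; rewrite h1 /=; by case/andP: (phiM_lb phi hxs (pure_mixed R b)).
have hz' : forall b, - M <= phiM phi z (pure R b) <= 0.
  move=> b; rewrite h2 andbT; by case/andP: (phiM_lb phi hz (pure_mixed R b)).
have hD : forall h, - M <= Dfrom phi xs z 0 h <= M.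
  by move=> h; apply: Dbound => //; rewrite oppr_le0 M0.
exists 1; split; first by rewrite ler01 lexx.
exists (sXb phi xs z); split => //.
move=> sY hY; rewrite ltxx.
set sX := sXb phi xs z.
have hE : forall T, - M <= \sum_(h : T.-tuple (S * S)) hist_prob sX sY h * Dfrom phi xs z 0 h <= M.
  move=> T; have sP := sum_hist_prob T hX hY.
  apply/andP; split.
    have : - M * \sum_(h : T.-tuple (S * S)) hist_prob sX sY h
         <= \sum_(h : T.-tuple (S * S)) hist_prob sX sY h * Dfrom phi xs z 0 h.
      rewrite mulr_sumr; apply: ler_sum => h _; rewrite mulrC; apply: ler_wpM2l.
        exact: hpf_ge0.
      by case/andP: (hD h).
    by rewrite sP mulr1.
  have : \sum_(h : T.-tuple (S * S)) hist_prob sX sY h * Dfrom phi xs z 0 h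
       <= M * \sum_(h : T.-tuple (S * S)) hist_prob sX sY h.
    rewrite mulr_sumr; apply: ler_sum => h _; rewrite [M * _]mulrC; apply: ler_wpM2l.
      exact: hpf_ge0.
    by case/andP: (hD h).
  by rewrite sP mulr1.
have -> : (fun T : nat => (T.+1%:R)^-1 * \sum_(0 <= t < T.+1) stage_payoff phi sX sY t)
  = (fun T : nat => (T.+1%:R)^-1 *
      \sum_(h : T.+1.-tuple (S * S)) hist_prob sX sY h * Dfrom phi xs z 0 h).
  by apply/funext => T; rewrite expect.
apply: (squeeze_cvgr (f := fun T : nat => - M * (T.+1%:R)^-1)
                     (h := fun T : nat => M * (T.+1%:R)^-1)).
- apply: nearW => T /=.
  have ip : 0 < (T.+1%:R : R)^-1 by rewrite invr_gt0 ltr0Sn.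
  by rewrite (mulrC (- M)) (mulrC M) !(ler_pM2l ip); exact: hE.
- rewrite -[X in _ --> X](mulr0 (- M)); apply: cvgMl_tmp; exact: cvg_harmonic.
- rewrite -[X in _ --> X](mulr0 M); apply: cvgMl_tmp; exact: cvg_harmonic.
Qed.

Unset Implicit Arguments.
Local Close Scope classical_set_scope.

Theorem proposition12 (R : realType) (S : finType) (phi : S -> S -> R)
  (HS : (0 < #|S|)%N) (Hsym : forall a b : S, phi a b = phi b a) :
  enforceable phi <-> (trivial_autocratic_exists phi \/ maxmin phi = 0).
Proof.
split; first by move=> he; right; exact: fwd.
case=> [[tau [htau h0]] | hv].
  by apply: (bwd htau htau) => b; rewrite h0.
case: (alt HS Hsym) => [[x [hx hpos]] | [z [hz hz0]]].
  exfalso.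
  have [d d0 hd] := finite_pos_lb hpos.
  have : d <= minval phi x.
    by apply: minval_ge => // y hy; apply: phiM_ge_pure.
  have := maxmin_ge phi HS hx; rewrite hv; lra.
have Hsym' : forall a b, - phi a b = - phi b a by move=> a b; rewrite Hsym.
case: (@alt R S (fun a b => - phi a b) HS Hsym') => [[x [hx hneg]] | [xs [hxs hxs0]]].
  exfalso.
  have [d d0 hd] := finite_pos_lb hneg.
  have hle : forall y, is_mixed y -> minval phi y <= - d.
    move=> y hy; apply: (le_trans (minval_le phi hy hx)).
    rewrite phiM_sym //; apply: phiM_le_pure => // b.
    by have := hd b; rewrite phiM_N; lra.
  have := maxmin_le HS hle; rewrite hv; lra.
apply: (bwd hxs hz _ hz0) => b.
by have := hxs0 b; rewrite phiM_N oppr_le0.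
Qed.
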